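(* Let $x_1,\dots,x_T\in\mathbb{R}^d$ and $r>0$. Let $A_0=I$, $A_t=A_{t-1}+\frac1rx_tx_t^\top$ for $t\ge1$, and let $D_t$ be the diagonal matrix with the same diagonal as $A_t$. Then $$\sum_{t=1}^Tx_t^\top D_t^{-1}x_t\le r\sum_{i=1}^d\ln\left(\frac1r\sum_{t=1}^Tx_{t,i}^2+1\right).$$ *)

(* Defs.v *)
From mathcomp Require Import all_boot all_order all_algebra.
From mathcomp Require Import all_classical all_reals all_analysis.
Set Implicit Arguments. Unset Strict Implicit. Unset Printing Implicit Defensive.
Import Order.TTheory GRing.Theory Num.Theory.
Local Open Scope ring_scope.

Fixpoint Amat (R : realType) (d : nat) (r : R) (x : nat -> 'cV[R]_d) (t : nat)
  : 'M[R]_d :=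
  match t with
  | 0 => 1%:M
  | t'.+1 => Amat r x t' + r^-1 *: (x t'.+1 *m (x t'.+1)^T)
  end.

Definition Dmat (R : realType) (d : nat) (r : R) (x : nat -> 'cV[R]_d) (t : nat)
  : 'M[R]_d := diag_mx (\row_i Amat r x t i i).

(* Main.v *)
Require Import Defs.
From mathcomp Require Import all_boot all_order all_algebra.
From mathcomp Require Import all_classical all_reals all_analysis.
From mathcomp Require Import ring lra.
Import Order.TTheory GRing.Theory Num.Theory.
Local Open Scope ring_scope.

Section Aux.
Variables (R : realType) (d : nat) (x : nat -> 'cV[R]_d) (r : R).

Definition aa (i : 'I_d) (t : nat) : R :=
  1 + r^-1 * \sum_(1 <= s < t.+1) (x s i ord0) ^+ 2.

Lemma Amat_diag i t : Amat r x t i i = aa i t.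
Proof.
rewrite /aa; elim: t => [|t IH] /=.
  by rewrite big_geq // mulr0 addr0 mxE eqxx.
rewrite mxE IH mxE mxE big_ord1 mxE [in RHS]big_nat_recr //= mulrDr addrA.
by rewrite expr2.
Qed.

Hypothesis hr : 0 < r.

Lemma aa_gt0 i t : 0 < aa i t.
Proof.
rewrite /aa.
have hs : 0 <= \sum_(1 <= s < t.+1) (x s i ord0) ^+ 2.
  by apply: sumr_ge0 => s _; apply: sqr_ge0.
have : 0 <= r^-1 * \sum_(1 <= s < t.+1) (x s i ord0) ^+ 2.
  by apply: mulr_ge0 => //; rewrite invr_ge0 ltW.
lra.
Qed.

Lemma invD t : invmx (Dmat r x t) = diag_mx (\row_i (aa i t)^-1).
Proof.
set W := diag_mx _.
have H1 : Dmat r x t *m W = 1%:M.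
  rewrite /Dmat /W mulmx_diag; apply/matrixP => i j.
  rewrite !mxE Amat_diag mulfV ?(gt_eqF (aa_gt0 _ _)) //.
have [U _] := mulmx1_unit H1.
by rewrite -[W](mulKmx U) H1 mulmx1.
Qed.

Lemma quad t : ((x t)^T *m invmx (Dmat r x t) *m x t) ord0 ord0
  = \sum_(i < d) (x t i ord0) ^+ 2 * (aa i t)^-1.
Proof.
rewrite invD mul_mx_diag mxE; apply: eq_bigr => i _.
by rewrite !mxE expr2 mulrAC.
Qed.

Lemma step i T : \sum_(1 <= t < T.+1) (x t i ord0) ^+ 2 * (aa i t)^-1
   <= r * ln (aa i T).
Proof.
elim: T => [|T IH].
  by rewrite big_geq // /aa big_geq // mulr0 addr0 ln1 mulr0.
rewrite big_nat_recr //=.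
have Hrec : aa i T.+1 = aa i T + r^-1 * (x T.+1 i ord0) ^+ 2.
  by rewrite /aa big_nat_recr //= mulrDr addrA.
have hT := aa_gt0 i T; have hT1 := aa_gt0 i T.+1.
have key : ln (aa i T / aa i T.+1) <= aa i T / aa i T.+1 - 1.
  have := @le_ln1Dx R (aa i T / aa i T.+1 - 1).
  rewrite (addrC 1) subrK; apply; rewrite ltrBrDl subrr.
  by rewrite divr_gt0.
rewrite ln_div ?posrE // in key.
have e : aa i T / aa i T.+1 - 1 = - (r^-1 * (x T.+1 i ord0) ^+ 2) / aa i T.+1.
  rewrite -[X in _ - X = _](divff (negbT (gt_eqF hT1))) -mulrBl {1}Hrec opprD addrA subrr add0r.
  by [].
rewrite e in key.
rewrite mulNr in key.
set q := r^-1 * x T.+1 i ord0 ^+ 2 / aa i T.+1 in key.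
have hq : x T.+1 i ord0 ^+ 2 / aa i T.+1 = r * q.
  by rewrite /q mulrA mulrA mulfV ?mul1r // gt_eqF.
have h2 : r * q <= r * (ln (aa i T.+1) - ln (aa i T)).
  by rewrite ler_pM2l //; lra.
rewrite hq; rewrite mulrBr in h2.
lra.
Qed.
End Aux.

Theorem lemma4 (R : realType) (d T : nat) (x : nat -> 'cV[R]_d) (r : R)
  (hr : 0 < r) :
  \sum_(1 <= t < T.+1) ((x t)^T *m invmx (Dmat r x t) *m x t) ord0 ord0
  <= r * \sum_(i < d) ln (r^-1 * \sum_(1 <= t < T.+1) (x t i ord0) ^+ 2 + 1).
Proof.
under eq_bigr => t _ do rewrite (@quad R d x r hr).
rewrite exchange_big /= mulr_sumr; apply: ler_sum => i _.
by rewrite addrC; apply: (@step R d x r hr).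
Qed.
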